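(* Let $T\in\mathbb{N}$, let $\mathbf{x}$ be a configuration and let $A(\mathbf{x},\cdot):[T]\to[0,1]$ satisfy the concavity assumption. For any $t\in[T]$, let $H^{(\mathbf{x})}=(A(\mathbf{x},1),\dots,A(\mathbf{x},t))$. Then $\textsc{Pred}(H^{(\mathbf{x})})\ge A(\mathbf{x},T)$.
   Context: $[T]=\{1,\dots,T\}$. Concavity assumption: for all $b\in\{2,\dots,T-1\}$, $A(\mathbf{x},b+1)-A(\mathbf{x},b)\le A(\mathbf{x},b)-A(\mathbf{x},b-1)$. For a finite sequence $H=(H_1,\dots,H_m)$, $\textsc{Pred}(H)$ is defined as follows: if $m=1$ return $+\infty$; otherwise, with $t_2=m$, $t_1=m-1$, $a_1=H_{t_1}$, $a_2=H_{t_2}$, return $a_2+(a_2-a_1)(T-t_2)$. *)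

(* Defs.v *)
From Stdlib Require Import Reals List.
From Coquelicot Require Import Rbar.
Import ListNotations.
Open Scope R_scope.

(* Pred(H) for a finite sequence H = (H_1,...,H_m) with horizon T:
   if m = 1 return +oo; otherwise with t2 = m, t1 = m-1, a1 = H_{t1},
   a2 = H_{t2}, return a2 + (a2 - a1)(T - t2).
   (For the empty sequence, which never arises, we also return +oo.) *)
Definition Pred (T : nat) (H : list R) : Rbar :=
  let m := length H in
  match m with
  | O | S O => p_infty
  | S (S _) =>
      let a1 := nth (m - 2)%nat H 0 in
      let a2 := nth (m - 1)%nat H 0 in
      Finite (a2 + (a2 - a1) * (INR T - INR m))
  end.

Definition history (A : nat -> R) (t : nat) : list R :=
  map A (seq 1 t).

Definition concave_on (T : nat) (A : nat -> R) : Prop :=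
  forall b : nat, (2 <= b)%nat -> (b <= T - 1)%nat ->
    A (S b) - A b <= A b - A (pred b).

(* Main.v *)
Require Import Defs.
From Stdlib Require Import Reals List Lra Lia.
From Coquelicot Require Import Rbar.
Open Scope R_scope.

Lemma aux (f : nat -> R) (T t : nat) :
  concave_on T f -> (2 <= t)%nat ->
  forall k, (t + k <= T)%nat ->
    f (t + k)%nat - f (pred (t + k)) <= f t - f (pred t) /\
    f (t + k)%nat <= f t + INR k * (f t - f (pred t)).
Proof.
  intros Hc Ht. induction k as [|k IH]; intros Hk.
  - rewrite Nat.add_0_r. simpl. lra.
  - destruct IH as [IH1 IH2]; [lia|].
    assert (Hb := Hc (t + k)%nat ltac:(lia) ltac:(lia)).
    replace (t + S k)%nat with (S (t + k)) by lia.
    simpl pred in *. rewrite S_INR.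
    replace (pred (t+k)) with (pred (t + k))%nat in * by reflexivity.
    split; lra.
Qed.

Theorem lemma5 (X : Type) (A : X -> nat -> R) (T : nat) (x : X) :
  (forall b : nat, (1 <= b <= T)%nat -> 0 <= A x b <= 1) ->
  concave_on T (A x) ->
  forall t : nat, (1 <= t <= T)%nat ->
    Rbar_le (Finite (A x T)) (Pred T (history (A x) t)).
Proof.
  intros _ Hc t Ht.
  assert (E : forall i, (i < t)%nat -> nth i (map (A x) (seq 1 t)) 0 = A x (1 + i)%nat).
  { intros i Hi. rewrite (nth_indep _ 0 (A x 0%nat)) by (rewrite length_map, length_seq; lia).
    rewrite map_nth, seq_nth by lia. reflexivity. }
  unfold Pred, history. rewrite length_map, length_seq.
  destruct t as [|[|t']]; try exact I; try lia.
  cbv zeta. rewrite !E by lia. unfold Rbar_le.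
  replace (1 + (S (S t') - 2))%nat with (S t') by lia.
  replace (1 + (S (S t') - 1))%nat with (S (S t')) by lia.
  destruct (aux (A x) T (S (S t')) Hc ltac:(lia) (T - S (S t'))%nat ltac:(lia)) as [_ H2].
  replace (S (S t') + (T - S (S t')))%nat with T in H2 by lia.
  rewrite minus_INR in H2 by lia. simpl pred in H2. lra.
Qed.
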